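(* Consider an $N$-agent Markov decision process with finite state space $\mathcal{S}$, finite individual action spaces $\mathcal{A}^i$, joint action space $\mathcal{A}=\prod_{i=1}^N\mathcal{A}^i$, bounded individual rewards and discount factor $\gamma\in(0,1)$. Let $\pi^{ii}_{old},\pi^{ii}_{new}$ ($i=1,\dots,N$) be individual policies, $\boldsymbol{\pi}_{old}(\boldsymbol{a}|s)=\prod_i\pi^{ii}_{old}(a^i|s)$ and $\boldsymbol{\pi}_{new}(\boldsymbol{a}|s)=\prod_i\pi^{ii}_{new}(a^i|s)$, and let $\boldsymbol{\tilde{\Pi}}_{new}=(\boldsymbol{\tilde{\pi}}^1_{new},\dots,\boldsymbol{\tilde{\pi}}^N_{new})$ with $\boldsymbol{\tilde{\pi}}^i_{new}(\boldsymbol{a}|s)=\prod_{j}\pi^{ij}_{new}(a^j|s)$, where for $j\neq i$ the $\pi^{ij}_{new}$ are arbitrary policies for agent $j$. Then $$\eta(\boldsymbol{\pi}_{new}) \geq \eta(\boldsymbol{\pi}_{old}) + \zeta_{\boldsymbol{\pi}_{old}}(\boldsymbol{\tilde{\Pi}}_{new}) - C \sum_{i=1}^N D_{KL}^{max}(\pi^{ii}_{old} \,\|\, \pi^{ii}_{new}) - f^{\boldsymbol{\pi}_{old}} - \sum_{i=1}^N \frac{1}{2} \max_{s, \boldsymbol{a}} \big| A_i^{\boldsymbol{\pi}_{old}}(s, \boldsymbol{a}) \big| \cdot \sum_{s, \boldsymbol{a}}\big(\boldsymbol{\tilde{\pi}}^i_{new}(\boldsymbol{a}|s) - \boldsymbol{\pi}_{new}(\boldsymbol{a}|s)\big)^2,$$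 where $C = \frac{4\gamma \max_{s, \boldsymbol{a}}|\sum_{i} A_i^{\boldsymbol{\pi}_{old}}(s, \boldsymbol{a})|}{(1-\gamma)^2}$, $D_{KL}^{max}(\pi^{ii}_{old}\|\pi^{ii}_{new})=\max_s D_{KL}(\pi^{ii}_{old}(\cdot|s)\|\pi^{ii}_{new}(\cdot|s))$, and $f^{\boldsymbol{\pi}_{old}} = \sum_{i} \frac{1}{2} \max_{s, \boldsymbol{a}} | A_i^{\boldsymbol{\pi}_{old}}(s, \boldsymbol{a}) | \cdot |\mathcal{A}| \cdot \sum_s (d^{\boldsymbol{\pi}_{old}}(s))^2$.
   Context: Trajectories under a joint policy $\boldsymbol{\pi}$ are generated by $s_0\sim d(s_0)$, $\boldsymbol{a}_t\sim\boldsymbol{\pi}(\cdot|s_t)$, $s_{t+1}\sim\mathcal{P}(\cdot|s_t,\boldsymbol{a}_t)$, rewards $r_t^i=\mathcal{R}^i(s_t,\boldsymbol{a}_t)$. The collective objective is $\eta(\boldsymbol{\pi})=\sum_{i=1}^N\mathbb{E}_{\tau\sim\boldsymbol{\pi}}[\sum_{t\ge0}\gamma^tr^i_t]$. Individual value functions $V_i^{\boldsymbol{\pi}}(s)=\mathbb{E}[\sum_{t\ge0}\gamma^t r^i_t\mid s_0=s]$, $Q_i^{\boldsymbol{\pi}}(s,\boldsymbol{a})=\mathbb{E}[\sum_{t\ge0}\gamma^t r^i_t\mid s_0=s,\boldsymbol{a}_0=\boldsymbol{a}]$, advantage $A_i^{\boldsymbol{\pi}}=Q_i^{\boldsymbol{\pi}}-V_i^{\boldsymbol{\pi}}$.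 State visitation distribution $d^{\boldsymbol{\pi}}(s)=\sum_{t\ge0}\gamma^tP(s_t=s\mid\boldsymbol{\pi})$. For a collection of suggesting joint policies $\boldsymbol{\tilde{\Pi}}=(\boldsymbol{\tilde{\pi}}^1,\dots,\boldsymbol{\tilde{\pi}}^N)$, $\zeta_{\boldsymbol{\pi}'}(\boldsymbol{\tilde{\Pi}})=\sum_{i}\sum_s d^{\boldsymbol{\pi}'}(s)\sum_{\boldsymbol{a}}\boldsymbol{\tilde{\pi}}^i(\boldsymbol{a}|s)A_i^{\boldsymbol{\pi}'}(s,\boldsymbol{a})$. *)

(* Defs.v *)
From HB Require Import structures.
From mathcomp Require Import all_boot all_order all_algebra.
From mathcomp Require Import all_classical all_reals all_analysis.
Set Implicit Arguments. Unset Strict Implicit. Unset Printing Implicit Defensive.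
Import Order.TTheory GRing.Theory Num.Theory.
Local Open Scope ring_scope.

Definition infsum {R : realType} (u : nat -> R) : R :=
  limn (fun n => \sum_(0 <= t < n) u t).

Section MAMDP.
Context {R : realType} {N : nat} {S : finType} {Act : 'I_N -> finType}.

Definition jact := {dffun forall i : 'I_N, Act i}.

Definition is_dist (T : finType) (p : T -> R) :=
  (forall x, 0 <= p x) /\ \sum_x p x = 1.

Definition prod_pol (p : forall j : 'I_N, S -> Act j -> R) : S -> jact -> R :=
  fun s a => \prod_(j < N) p j s (a j).

Variables (P : S -> jact -> S -> R) (Rw : 'I_N -> S -> jact -> R) (gamma : R).

Fixpoint stdist (pi : S -> jact -> R) (mu : S -> R) (t : nat) : S -> R :=
  match t with
  | 0 => mu
  | t'.+1 => fun s' => \sum_s stdist pi mu t' s * (\sum_a pi s a * P s a s')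
  end.

Definition exp_rew (pi : S -> jact -> R) (i : 'I_N) (mu : S -> R) : R :=
  \sum_s mu s * \sum_a pi s a * Rw i s a.

Definition delta (s : S) : S -> R := fun s' => if s' == s then 1 else 0.

Definition Vfun (pi : S -> jact -> R) (i : 'I_N) (s : S) : R :=
  infsum (fun t => gamma ^+ t * exp_rew pi i (stdist pi (delta s) t)).

(* Q_i^pi(s,a) = E[ sum_t gamma^t r_t^i | s_0 = s, a_0 = a ] :
   r_0 = R^i(s,a), and s_1 ~ P(.|s,a), later actions from pi *)
Definition Qterm (pi : S -> jact -> R) (i : 'I_N) (s : S) (a : jact) (t : nat) : R :=
  match t with
  | 0 => Rw i s a
  | t'.+1 => exp_rew pi i (stdist pi (P s a) t')
  end.

Definition Qfun (pi : S -> jact -> R) (i : 'I_N) (s : S) (a : jact) : R :=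
  infsum (fun t => gamma ^+ t * Qterm pi i s a t).

Definition Afun (pi : S -> jact -> R) (i : 'I_N) (s : S) (a : jact) : R :=
  Qfun pi i s a - Vfun pi i s.

Variable d0 : S -> R.

Definition eta_tot (pi : S -> jact -> R) : R :=
  \sum_(i < N) infsum (fun t => gamma ^+ t * exp_rew pi i (stdist pi d0 t)).

Definition dvis (pi : S -> jact -> R) (s : S) : R :=
  infsum (fun t => gamma ^+ t * stdist pi d0 t s).

Definition zeta_tot (pi' : S -> jact -> R) (Pit : 'I_N -> S -> jact -> R) : R :=
  \sum_(i < N) \sum_s dvis pi' s * \sum_a Pit i s a * Afun pi' i s a.

(* max over (s,a) of a nonnegative quantity *)
Definition maxSA (f : S -> jact -> R) : R :=
  \big[Num.max/0]_(p : S * jact) f p.1 p.2.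

End MAMDP.

(* KL divergence D_KL(p || q) = sum_{x : p x <> 0} p x ln (p x / q x)
   (only used under absolute continuity q x = 0 -> p x = 0) *)
Definition KL {R : realType} (T : finType) (p q : T -> R) : R :=
  \sum_(x | p x != 0) p x * ln (p x / q x).

Definition KLmax {R : realType} (S T : finType) (p q : S -> T -> R) : R :=
  \big[Num.max/0]_s KL (p s) (q s).

(* Main.v *)
Require Import Defs.
From HB Require Import structures.
From mathcomp Require Import all_boot all_order all_algebra.
From mathcomp Require Import all_classical all_reals all_analysis.
From mathcomp Require Import ring lra.
Import Order.TTheory GRing.Theory Num.Theory.
Import numFieldNormedType.Exports.
Local Open Scope ring_scope.

Section Aux.
Context {R : realType}.

Lemma bigmax0_ge0 (I : Type) (r : seq I) (F : I -> R) :
  0 <= \big[Num.max/0]_(i <- r) F i.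
Proof.
elim: r => [|i r ih]; first by rewrite big_nil.
by rewrite big_cons le_max ih orbT.
Qed.

Lemma le_bigmax0 (I : finType) (F : I -> R) x :
  F x <= \big[Num.max/0]_i F i.
Proof.
have : x \in index_enum I by rewrite mem_index_enum.
elim: (index_enum I) => [//|i r ih]; rewrite inE big_cons => /orP[/eqP->|/ih h].
  by rewrite le_max lexx.
by rewrite le_max h orbT.
Qed.

Lemma ler_term_sum (I : finType) (F : I -> R) x :
  (forall i, 0 <= F i) -> F x <= \sum_i F i.
Proof.
by move=> F0; rewrite (bigD1 x) //= lerDl sumr_ge0.
Qed.

Lemma norm_le_sum (I : finType) (F : I -> R) x : `|F x| <= \sum_i `|F i|.
Proof. by apply: (@ler_term_sum _ (fun i => `|F i|)) => i. Qed.

Lemma sum_delta (I : finType) (F : I -> R) x :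
  \sum_i (if i == x then 1 else 0) * F i = F x.
Proof.
rewrite (bigD1 x) //= eqxx mul1r big1 ?addr0 // => i /negbTE ->; by rewrite mul0r.
Qed.

Lemma sum_delta' (I : finType) (F : I -> R) x :
  \sum_i F i * (if x == i then 1 else 0) = F x.
Proof.
rewrite (bigD1 x) //= eqxx mulr1 big1 ?addr0 // => i; rewrite eq_sym => /negbTE ->; by rewrite mulr0.
Qed.

Lemma cauchy_schwarz (I : finType) (a b : I -> R) :
  (\sum_i a i * b i) ^+ 2 <= (\sum_i a i ^+ 2) * (\sum_i b i ^+ 2).
Proof.
have H : 0 <= \sum_i \sum_j (a i * b j - a j * b i) ^+ 2.
  by apply: sumr_ge0 => i _; apply: sumr_ge0 => j _; apply: sqr_ge0.
have E1 : forall i j, (a i * b j - a j * b i) ^+ 2 =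
   a i ^+ 2 * b j ^+ 2 + a j ^+ 2 * b i ^+ 2 - 2 * ((a i * b i) * (a j * b j)).
  by move=> i j; ring.
have P1 : \sum_i \sum_j a i ^+2 * b j ^+2 = (\sum_i a i ^+2) * (\sum_i b i ^+2).
  by rewrite mulr_suml; apply: eq_bigr => i _; rewrite mulr_sumr.
have P2 : \sum_i \sum_j a j ^+2 * b i ^+2 = (\sum_i a i ^+2) * (\sum_i b i ^+2).
  by rewrite exchange_big; exact: P1.
have P3 : \sum_i \sum_j (a i * b i) * (a j * b j) = (\sum_i a i * b i) ^+ 2.
  by rewrite expr2 mulr_suml; apply: eq_bigr => i _; rewrite mulr_sumr.
rewrite (eq_bigr (fun i => \sum_j a i^+2*b j^+2 + \sum_j a j^+2*b i^+2
     - 2 * \sum_j (a i*b i)*(a j*b j))) in H; last first.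
  by move=> i _; rewrite (eq_bigr _ (fun j _ => E1 i j)) sumrB big_split mulr_sumr.
rewrite sumrB big_split /= -mulr_sumr P1 P2 P3 in H.
lra.
Qed.

End Aux.

Section Ser.
Context {R : realType}.
Implicit Types u v : nat -> R.

Definition summ u := cvgn (series u).

Lemma infsumE u : infsum u = limn (series u).
Proof. by []. Qed.

Lemma summ_geo (g G : R) (x : nat -> R) : 0 <= g < 1 ->
  (forall t, `|x t| <= G) -> summ (fun t => g ^+ t * x t).
Proof.
move=> /andP[g0 g1] xG; apply: normed_cvg.
have G0 : 0 <= G by apply: le_trans (xG 0%N).
apply: (series_le_cvg (v_ := geometric G g)).
- by move=> n; rewrite normr_ge0.
- by move=> n; rewrite /geometric /= mulr_ge0 // exprn_ge0.
- move=> n; rewrite /geometric /= normrM ger0_norm ?exprn_ge0 // mulrC.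
  by rewrite ler_wpM2r ?exprn_ge0.
- by apply: is_cvg_geometric_series; rewrite ger0_norm.
Qed.

Lemma summD u v : summ u -> summ v -> summ (fun t => u t + v t).
Proof. by move=> hu hv; apply: (is_cvg_seriesD hu hv). Qed.

Lemma infsumD u v : summ u -> summ v -> infsum (fun t => u t + v t) = infsum u + infsum v.
Proof. by move=> hu hv; apply: (lim_seriesD hu hv). Qed.

Lemma summZ c u : summ u -> summ (fun t => c * u t).
Proof.
move=> hu; rewrite /summ (_ : series (fun t => c * u t) = series (c *: u)).
  exact: is_cvg_seriesZ.
by apply/funext=> n; rewrite /series/=; apply: eq_bigr => t _.
Qed.

Lemma infsumZ c u : summ u -> infsum (fun t => c * u t) = c * infsum u.
Proof.
move=> hu; rewrite infsumE (_ : series (fun t => c * u t) = series (c *: u)).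
  exact: lim_seriesZ.
by apply/funext=> n; rewrite /series/=; apply: eq_bigr => t _.
Qed.

Lemma summN u : summ u -> summ (fun t => - u t).
Proof. by move=> hu; have := @summZ (-1) u hu; under eq_fun do rewrite mulN1r. Qed.

Lemma infsumN u : summ u -> infsum (fun t => - u t) = - infsum u.
Proof. by move=> hu; have := @infsumZ (-1) u hu; under eq_fun do rewrite mulN1r; rewrite mulN1r. Qed.

Lemma summB u v : summ u -> summ v -> summ (fun t => u t - v t).
Proof. by move=> hu hv; apply: summD => //; apply: summN. Qed.

Lemma infsumB u v : summ u -> summ v -> infsum (fun t => u t - v t) = infsum u - infsum v.
Proof. by move=> hu hv; rewrite infsumD ?infsumN //; apply: summN. Qed.

Lemma summ_sum_seq (I : Type) (r : seq I) (F : I -> nat -> R) :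
  (forall i, summ (F i)) -> summ (fun t => \sum_(i <- r) F i t) /\
   infsum (fun t => \sum_(i <- r) F i t) = \sum_(i <- r) infsum (F i).
Proof.
move=> hF; elim: r => [|i r [h1 h2]].
  have e : series (fun t => \sum_(i <- [::]) F i t) = fun=> 0.
    by apply/funext => n; rewrite /series /= big1 // => t _; rewrite big_nil.
  split; first by rewrite /summ e; exact: is_cvg_cst.
  by rewrite infsumE e lim_cst ?big_nil.
under eq_fun do rewrite big_cons.
split; first by apply: summD.
by rewrite infsumD // h2 big_cons.
Qed.

Lemma summ_sum (I : finType) (F : I -> nat -> R) :
  (forall i, summ (F i)) -> summ (fun t => \sum_i F i t).
Proof. by move=> hF; case: (@summ_sum_seq I (index_enum I) F hF). Qed.

Lemma infsum_sum (I : finType) (F : I -> nat -> R) :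
  (forall i, summ (F i)) -> infsum (fun t => \sum_i F i t) = \sum_i infsum (F i).
Proof. by move=> hF; case: (@summ_sum_seq I (index_enum I) F hF). Qed.

Lemma summ_shift u : summ u -> summ (fun t => u t.+1).
Proof.
move=> hu; rewrite /summ.
have -> : series (fun t => u t.+1) = (fun n => series u n.+1 - u 0%N).
  apply/funext => n; rewrite /series /= big_nat_recl //= addrAC subrr add0r.
  by [].
apply: is_cvgB; last exact: is_cvg_cst.
by apply/cvg_ex; exists (limn (series u)); rewrite (cvg_shiftS (series u)); exact: hu.
Qed.

Lemma infsum_shift u : summ u -> infsum u = u 0%N + infsum (fun t => u t.+1).
Proof.
move=> hu; have hs := @summ_shift u hu.
rewrite !infsumE.
have e : series (fun t => u t.+1) = (fun n => series u n.+1 - u 0%N).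
  apply/funext => n; rewrite /series /= big_nat_recl //= addrAC subrr add0r.
  by [].
have H : (series (fun t => u t.+1) @ \oo --> limn (series u) - u 0%N)%classic.
  rewrite e; apply: cvgB; last exact: cvg_cst.
  by rewrite (cvg_shiftS (series u)).
rewrite (cvg_lim _ H) //.
by rewrite addrC subrK.
Qed.

Lemma infsum_ge0 u : summ u -> (forall t, 0 <= u t) -> 0 <= infsum u.
Proof.
move=> hu u0; rewrite infsumE; apply: limr_ge => //.
by near=> n; rewrite /series /= sumr_ge0.
Unshelve. all: by end_near.
Qed.

End Ser.

Arguments summD {R} [u v]. Arguments infsumD {R} [u v].
Arguments summZ {R} c [u]. Arguments infsumZ {R} c [u].
Arguments summN {R} [u]. Arguments infsumN {R} [u].
Arguments summB {R} [u v]. Arguments infsumB {R} [u v].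
Arguments summ_shift {R} [u]. Arguments infsum_shift {R} [u].
Arguments infsum_ge0 {R} [u].
Arguments summ_sum {R} [I F]. Arguments infsum_sum {R} [I F].

Section KLs.
Variable R : realType.

Lemma KL_full (T : finType) (p q : T -> R) :
  KL p q = \sum_x p x * ln (p x / q x).
Proof.
rewrite /KL big_mkcond; apply: eq_bigr => x _.
by case: eqP => [->|]; rewrite ?mul0r.
Qed.

Lemma KL_point (p q : R) : 0 <= p -> 0 <= q -> (q = 0 -> p = 0) ->
  2 * p - 2 * (Num.sqrt p * Num.sqrt q) <= p * ln (p / q).
Proof.
move=> p0 q0 ac.
have [->|pn0] := eqVneq p 0; first by rewrite sqrtr0 !mul0r mulr0 subr0.
have pp : 0 < p by rewrite lt_def pn0.
have qp : 0 < q.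
  by rewrite lt_def q0 andbT; apply/eqP => /ac /eqP; rewrite (negbTE pn0).
set sp := Num.sqrt p; set sq := Num.sqrt q.
have spp : 0 < sp by rewrite sqrtr_gt0.
have sqp : 0 < sq by rewrite sqrtr_gt0.
have ep : p = sp ^+ 2 by rewrite sqr_sqrtr.
have eq : q = sq ^+ 2 by rewrite sqr_sqrtr.
have e1 : ln (p / q) = - (ln (sq / sp) *+ 2).
  rewrite ep eq -expr_div_n lnXn ?divr_gt0 //.
  rewrite -(invf_div sq sp) lnV; last by rewrite posrE divr_gt0.
  by rewrite mulNrn.
have h : ln (sq / sp) <= sq / sp - 1.
  have := @le_ln1Dx R (sq / sp - 1).
  rewrite [1 + _]addrC subrK; apply.
  by rewrite ltrBrDl subrr divr_gt0.
rewrite e1.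
have e2 : p * (sq / sp) = sp * sq.
  by rewrite ep expr2 mulrC mulrA mulfVK ?gt_eqF // mulrC.
have : p * (sq / sp - 1) >= p * ln (sq / sp) by rewrite ler_wpM2l.
rewrite mulrBr e2 mulr1 => h2.
rewrite mulrN mulrnAr; lra.
Qed.

Variable T : finType.
Variables p q : T -> R.
Hypothesis pd : is_dist p.
Hypothesis qd : is_dist q.
Hypothesis ac : forall x, q x = 0 -> p x = 0.

Let sp x := Num.sqrt (p x).
Let sq x := Num.sqrt (q x).
Let BC := \sum_x sp x * sq x.

Lemma hel_eq : \sum_x (sp x - sq x) ^+ 2 = 2 - 2 * BC.
Proof.
case: pd => p0 p1; case: qd => q0 q1.
have e : forall x, (sp x - sq x) ^+ 2 = p x + q x - 2 * (sp x * sq x).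
  by move=> x; rewrite sqrrB !sqr_sqrtr // mulr2n mulrA; lra.
under eq_bigr do rewrite e.
by rewrite sumrB big_split /= p1 q1 -mulr_sumr.
Qed.

Lemma sum_plus_eq : \sum_x (sp x + sq x) ^+ 2 = 2 + 2 * BC.
Proof.
case: pd => p0 p1; case: qd => q0 q1.
have e : forall x, (sp x + sq x) ^+ 2 = p x + q x + 2 * (sp x * sq x).
  by move=> x; rewrite sqrrD !sqr_sqrtr // mulr2n mulrA; lra.
under eq_bigr do rewrite e.
by rewrite big_split big_split /= p1 q1 -mulr_sumr.
Qed.

Lemma hel_le_KL : 2 - 2 * BC <= KL p q.
Proof.
case: pd => p0 p1; case: qd => q0 q1.
rewrite KL_full.
have -> : 2 - 2 * BC = \sum_x (2 * p x - 2 * (sp x * sq x)).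
  by rewrite sumrB -!mulr_sumr p1 mulr1.
apply: ler_sum => x _; apply: KL_point => //; exact: ac.
Qed.

Lemma TV_KL : (\sum_x `|p x - q x|) ^+ 2 <= 4 * KL p q.
Proof.
case: pd => p0 p1; case: qd => q0 q1.
have e : forall x, `|p x - q x| = `|sp x - sq x| * (sp x + sq x).
  move=> x; rewrite -[sp x + sq x]ger0_norm ?addr_ge0 ?sqrtr_ge0 // -normrM.
  by rewrite -subr_sqr !sqr_sqrtr.
under eq_bigr do rewrite e.
apply: le_trans (@cauchy_schwarz R T _ _) _.
under eq_bigr do rewrite real_normK ?num_real //.
rewrite hel_eq sum_plus_eq.
have h1 := hel_le_KL.
have h2 : 0 <= \sum_x (sp x - sq x) ^+ 2 by apply: sumr_ge0 => x _; apply: sqr_ge0.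
rewrite hel_eq in h2.
have h3 : 0 <= BC by apply: sumr_ge0 => x _; rewrite mulr_ge0 ?sqrtr_ge0.
nra.
Qed.

End KLs.

Lemma sum_prod_dffun (R : realType) (N : nat) (Act : 'I_N -> finType)
  (F : forall i : 'I_N, Act i -> R) :
  \sum_(a : @jact N Act) \prod_(i < N) F i (a i) = \prod_(i < N) \sum_(x : Act i) F i x.
Proof.
pose P_ := fun i : 'I_N => [ffun x : Act i => F i x].
transitivity (\prod_(i < N) \sum_(x : Act i) P_ i x); last first.
  by apply: eq_bigr => i _; apply: eq_bigr => x _; rewrite ffunE.
under [RHS]eq_bigr do rewrite (big_tag P_).
rewrite bigA_distr_big_dep.
rewrite -big_fprod.
rewrite (reindex (@dffun_of_fprod 'I_N Act)); last first.
  by exists (@fprod_of_dffun 'I_N Act) => x _; [apply: dffun_of_fprodK | apply: fprod_of_dffunK].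
apply: eq_bigr => t _; apply: eq_bigr => i _.
by rewrite /P_ !ffunE.
Qed.

Section Prod.
Variables (R : realType) (N : nat) (Act : 'I_N -> finType).
Local Notation jA := (@jact N Act).

Lemma ln_prod (I : Type) (r : seq I) (F : I -> R) :
  (forall i, 0 < F i) -> ln (\prod_(i <- r) F i) = \sum_(i <- r) ln (F i).
Proof.
move=> Fp; elim: r => [|i r ih]; first by rewrite !big_nil ln1.
rewrite !big_cons lnM ?ih // posrE //; exact: prodr_gt0.
Qed.

Lemma prod_eq0 (F : forall j, Act j -> R) (a : jA) j :
  F j (a j) = 0 -> \prod_(k < N) F k (a k) = 0.
Proof. by move=> h; rewrite (bigD1 j) //= h mul0r. Qed.

Lemma prodd_dist (p : forall j, Act j -> R) :
  (forall j, is_dist (p j)) -> is_dist (fun a : jA => \prod_(k < N) p k (a k)).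
Proof.
move=> pd; split.
  by move=> a; apply: prodr_ge0 => k _; case: (pd k).
rewrite sum_prod_dffun; apply: big1 => k _; by case: (pd k).
Qed.

Lemma prodd_ac (p q : forall j, Act j -> R) :
  (forall j x, q j x = 0 -> p j x = 0) ->
  forall a : jA, \prod_(k < N) q k (a k) = 0 -> \prod_(k < N) p k (a k) = 0.
Proof.
move=> ac a /eqP /prodf_eq0 [j _ /eqP hj].
by apply: (@prod_eq0 p a j); apply: ac.
Qed.

Lemma KL_prodd (p q : forall j, Act j -> R) :
  (forall j, is_dist (p j)) -> (forall j, is_dist (q j)) ->
  (forall j x, q j x = 0 -> p j x = 0) ->
  KL (fun a : jA => \prod_(k < N) p k (a k)) (fun a : jA => \prod_(k < N) q k (a k))
  = \sum_(j < N) KL (p j) (q j).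
Proof.
move=> pd qd ac.
pose h k x := ln (p k x / q k x).
rewrite KL_full.
transitivity (\sum_(a : jA) \sum_(j < N) (\prod_(k < N) p k (a k)) * h j (a j)).
  apply: eq_bigr => a _; rewrite -mulr_sumr.
  have [->|pn0] := eqVneq (\prod_(k < N) p k (a k)) 0; first by rewrite !mul0r.
  have ppos : forall k, 0 < p k (a k).
    move=> k; rewrite lt_def; case: (pd k) => -> _; rewrite andbT.
    by apply/eqP => /(@prod_eq0 p a k) /eqP; rewrite (negbTE pn0).
  have qpos : forall k, 0 < q k (a k).
    move=> k; rewrite lt_def; case: (qd k) => -> _; rewrite andbT.
    by apply/eqP => /ac h0; move: (ppos k); rewrite h0 ltxx.
  congr (_ * _); rewrite -prodf_div ln_prod // => k.
  by rewrite divr_gt0.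
rewrite exchange_big /=; apply: eq_bigr => j _.
rewrite KL_full.
pose G k x := p k x * (if k == j then h k x else 1).
transitivity (\sum_(a : jA) \prod_(k < N) G k (a k)).
  apply: eq_bigr => a _; rewrite /G big_split /=; congr (_ * _).
  rewrite (bigD1 j) //= eqxx big1 ?mulr1 // => k /negbTE -> //.
rewrite sum_prod_dffun (bigD1 j) //= [X in _ * X]big1 ?mulr1.
  by apply: eq_bigr => x _; rewrite /G eqxx.
move=> k /negbTE kj; rewrite /G; under eq_bigr do rewrite kj mulr1.
by case: (pd k).
Qed.

End Prod.

Section MDP.
Variables (R : realType) (N : nat) (S : finType) (Act : 'I_N -> finType).
Local Notation jA := (@jact N Act).
Variables (P : S -> jA -> S -> R) (Rw : 'I_N -> S -> jA -> R) (gamma : R) (d0 : S -> R).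
Hypothesis hg : 0 <= gamma < 1.
Hypothesis hP : forall s a, is_dist (P s a).
Hypothesis hd0 : is_dist d0.

Definition Mk (pi : S -> jA -> R) s s' := \sum_a pi s a * P s a s'.

Lemma stS_def pi mu t s' :
  stdist P pi mu t.+1 s' = \sum_s stdist P pi mu t s * Mk pi s s'.
Proof. by []. Qed.

Lemma Mk_dist (pi : S -> jA -> R) : (forall s, is_dist (pi s)) -> forall s, is_dist (Mk pi s).
Proof.
move=> pd s; split.
  move=> s'; apply: sumr_ge0 => a _; apply: mulr_ge0; [by case: (pd s)|by case: (hP s a)].
rewrite /Mk exchange_big /=.
under eq_bigr do rewrite -mulr_sumr; case: (pd s) => _ <-.
by apply: eq_bigr => a _; case: (hP s a) => _ ->; rewrite mulr1.
Qed.

Lemma st_dist (pi : S -> jA -> R) (mu : S -> R) t : (forall s, is_dist (pi s)) -> is_dist mu ->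
  is_dist (stdist P pi mu t).
Proof.
move=> pd md; elim: t => [//|t [ih0 ih1]]; split.
  move=> s'; rewrite stS_def; apply: sumr_ge0 => s _; apply: mulr_ge0 => //.
  by case: (Mk_dist _ pd s) => h _; apply: h.
under eq_bigr do rewrite stS_def.
rewrite exchange_big /=; rewrite -ih1; apply: eq_bigr => s _.
by rewrite -mulr_sumr; case: (Mk_dist _ pd s) => _ ->; rewrite mulr1.
Qed.

Arguments Mk_dist [pi]. Arguments st_dist [pi mu].

Lemma dist_le1 (T : finType) (mu : T -> R) : is_dist mu -> forall s, 0 <= mu s <= 1.
Proof.
move=> [m0 m1] s; rewrite m0 /= -m1; exact: ler_term_sum.
Qed.

Lemma avg_bound (T : finType) (mu : T -> R) g G : is_dist mu ->
  (forall s, `|g s| <= G) -> `|\sum_s mu s * g s| <= G.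
Proof.
move=> [m0 m1] gG; apply: le_trans (ler_norm_sum _ _ _) _.
apply: le_trans (_ : \sum_s mu s * G <= G).
  apply: ler_sum => s _; rewrite normrM ger0_norm //; exact: ler_wpM2l.
by rewrite -mulr_suml m1 mul1r.
Qed.

Lemma st_lin pi (K : finType) (c : K -> R) (nu : K -> S -> R) t s' :
  stdist P pi (fun y => \sum_k c k * nu k y) t s' = \sum_k c k * stdist P pi (nu k) t s'.
Proof.
elim: t s' => [//|t ih] s'.
rewrite stS_def; under eq_bigr do rewrite ih.
under eq_bigr do rewrite mulr_suml.
rewrite exchange_big /=; apply: eq_bigr => k _; rewrite ?stS_def mulr_sumr.
by apply: eq_bigr => s _; rewrite mulrA.
Qed.

Lemma mu_decomp (mu : S -> R) : mu = fun y => \sum_x mu x * delta x y.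
Proof. by apply/funext => y; rewrite /delta sum_delta'. Qed.

Lemma st_S pi mu t :
  stdist P pi mu t.+1 = stdist P pi (fun s' => \sum_s mu s * Mk pi s s') t.
Proof.
elim: t => [//|t ih]; apply/funext => s'.
by rewrite stS_def ih.
Qed.

Lemma er_lin pi i (K : finType) (c : K -> R) (nu : K -> S -> R) :
  exp_rew Rw pi i (fun y => \sum_k c k * nu k y) = \sum_k c k * exp_rew Rw pi i (nu k).
Proof.
rewrite /exp_rew; under eq_bigr do rewrite mulr_suml.
rewrite exchange_big /=; apply: eq_bigr => k _; rewrite mulr_sumr.
by apply: eq_bigr => s _; rewrite mulrA.
Qed.

Lemma er_st_decomp pi i mu t :
  exp_rew Rw pi i (stdist P pi mu t) = \sum_x mu x * exp_rew Rw pi i (stdist P pi (delta x) t).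
Proof.
rewrite {1}(mu_decomp mu).
have -> : stdist P pi (fun y => \sum_x mu x * delta x y) t =
          (fun y => \sum_x mu x * stdist P pi (delta x) t y).
  by apply/funext => y; rewrite st_lin.
by rewrite er_lin.
Qed.

Definition rb i := \sum_s \sum_a `|Rw i s a|.

Lemma rw_bound i s a : `|Rw i s a| <= rb i.
Proof.
apply: le_trans (_ : \sum_a `|Rw i s a| <= rb i); first exact: norm_le_sum.
apply: (@ler_term_sum _ _ (fun s => \sum_a `|Rw i s a|)) => x.
by apply: sumr_ge0.
Qed.

Lemma er_bound pi i mu : (forall s, is_dist (pi s)) -> is_dist mu ->
  `|exp_rew Rw pi i mu| <= rb i.
Proof.
move=> pd md; apply: avg_bound => // s; apply: avg_bound => // a.
exact: rw_bound.
Qed.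

Lemma delta_dist s : is_dist (@delta R S s).
Proof.
split; first by move=> x; rewrite /delta; case: eqP.
have := @sum_delta R S (fun _ : S => (1:R)) s; under eq_bigr do rewrite mulr1.
by [].
Qed.

Lemma summ_er pi i mu : (forall s, is_dist (pi s)) -> is_dist mu ->
  summ (fun t => gamma ^+ t * exp_rew Rw pi i (stdist P pi mu t)).
Proof.
by move=> pd md; apply: (@summ_geo R gamma (rb i)) => // t; apply: er_bound => //; exact: st_dist.
Qed.

Lemma summ_st pi mu g : (forall s, is_dist (pi s)) -> is_dist mu ->
  summ (fun t => gamma ^+ t * \sum_s stdist P pi mu t s * g s).
Proof.
move=> pd md; apply: (@summ_geo R gamma (\sum_s `|g s|)) => // t.
apply: avg_bound; first exact: st_dist.
by move=> s; exact: norm_le_sum.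
Qed.

Lemma summ_st1 pi mu s : (forall s, is_dist (pi s)) -> is_dist mu ->
  summ (fun t => gamma ^+ t * stdist P pi mu t s).
Proof.
move=> pd md; apply: (@summ_geo R gamma (1)) => // t.
have := @dist_le1 S _ (st_dist t pd md) s => /andP[h0 h1].
by rewrite ger0_norm.
Qed.

Lemma summ_Q pi i s a : (forall s, is_dist (pi s)) ->
  summ (fun t => gamma ^+ t * Qterm P Rw pi i s a t).
Proof.
move=> pd; apply: (@summ_geo R gamma (rb i)) => // -[|t] /=; first exact: rw_bound.
by apply: er_bound => //; apply: st_dist.
Qed.


Arguments summ_er [pi] i [mu]. Arguments summ_st [pi mu] g. Arguments summ_st1 [pi mu] s.
Arguments summ_Q [pi] i s a.

Lemma infsum_ext (u v : nat -> R) : (forall t, u t = v t) -> infsum u = infsum v.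
Proof. by move=> h; congr infsum; apply/funext. Qed.
Arguments infsum_ext [u v].

Lemma V_Q pi i s : (forall s, is_dist (pi s)) ->
  Vfun P Rw gamma pi i s = \sum_a pi s a * Qfun P Rw gamma pi i s a.
Proof.
move=> pd.
have hV := summ_er i pd (delta_dist s).
rewrite /Vfun (infsum_shift hV).
have e0 : gamma ^+ 0 * exp_rew Rw pi i (stdist P pi (delta s) 0) = \sum_a pi s a * Rw i s a.
  by rewrite expr0 mul1r /exp_rew /= /delta sum_delta.
have e1 : forall t, gamma ^+ t.+1 * exp_rew Rw pi i (stdist P pi (delta s) t.+1) =
    \sum_a pi s a * (gamma ^+ t.+1 * Qterm P Rw pi i s a t.+1).
  move=> t; rewrite st_S.
  have -> : (fun s' => \sum_x delta s x * Mk pi x s') = (fun s' => \sum_a pi s a * P s a s').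
    by apply/funext => s'; rewrite /delta sum_delta.
  have -> : stdist P pi (fun s' => \sum_a pi s a * P s a s') t =
            (fun y => \sum_a pi s a * stdist P pi (P s a) t y).
    by apply/funext => y; rewrite st_lin.
  rewrite er_lin mulr_sumr; apply: eq_bigr => a _ /=; by rewrite mulrCA.
rewrite e0 (infsum_ext e1) infsum_sum; last first.
  by move=> a; apply: summZ; exact: (summ_shift (summ_Q i s a pd)).
rewrite -big_split /=; apply: eq_bigr => a _.
rewrite infsumZ; last by exact: (summ_shift (summ_Q i s a pd)).
rewrite -mulrDr /Qfun (infsum_shift (summ_Q i s a pd)) expr0 mul1r.
by [].
Qed.

Lemma Q_bell pi i s a : (forall s, is_dist (pi s)) ->
  Qfun P Rw gamma pi i s a = Rw i s a + gamma * \sum_s' P s a s' * Vfun P Rw gamma pi i s'.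
Proof.
move=> pd.
rewrite /Qfun (infsum_shift (summ_Q i s a pd)) expr0 mul1r.
congr (_ + _).
rewrite (@infsum_ext _ (fun t => gamma * \sum_s' P s a s' *
    (gamma ^+ t * exp_rew Rw pi i (stdist P pi (delta s') t)))); last first.
  move=> t /=; rewrite er_st_decomp exprS -mulrA; congr (_ * _).
  by rewrite mulr_sumr; apply: eq_bigr => s' _; rewrite mulrCA.
rewrite infsumZ; last first.
  by apply: summ_sum => s'; apply: summZ; apply: summ_er => //; apply: delta_dist.
congr (_ * _); rewrite infsum_sum; last first.
  by move=> s'; apply: summZ; apply: summ_er => //; apply: delta_dist.
apply: eq_bigr => s' _; rewrite infsumZ //.
by apply: summ_er => //; apply: delta_dist.
Qed.

Lemma A_sum0 pi i s : (forall s, is_dist (pi s)) ->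
  \sum_a pi s a * Afun P Rw gamma pi i s a = 0.
Proof.
move=> pd; rewrite /Afun.
under eq_bigr do rewrite mulrBr.
by rewrite sumrB -V_Q // -mulr_suml (pd s).2 mul1r subrr.
Qed.

Lemma eta_V pi i : (forall s, is_dist (pi s)) ->
  infsum (fun t => gamma ^+ t * exp_rew Rw pi i (stdist P pi d0 t)) =
  \sum_s d0 s * Vfun P Rw gamma pi i s.
Proof.
move=> pd.
rewrite (@infsum_ext _ (fun t => \sum_s d0 s *
    (gamma ^+ t * exp_rew Rw pi i (stdist P pi (delta s) t)))); last first.
  by move=> t; rewrite er_st_decomp mulr_sumr; apply: eq_bigr => s _; rewrite mulrCA.
rewrite infsum_sum; last first.
  by move=> s; apply: summZ; apply: summ_er => //; apply: delta_dist.
apply: eq_bigr => s _; rewrite infsumZ //.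
by apply: summ_er => //; apply: delta_dist.
Qed.

Lemma dW pi g : (forall s, is_dist (pi s)) ->
  \sum_s dvis P gamma d0 pi s * g s =
  infsum (fun t => gamma ^+ t * \sum_s stdist P pi d0 t s * g s).
Proof.
move=> pd.
rewrite (@infsum_ext _ (fun t => \sum_s g s * (gamma ^+ t * stdist P pi d0 t s))); last first.
  by move=> t; rewrite mulr_sumr; apply: eq_bigr => s _; rewrite mulrA mulrC.
rewrite infsum_sum; last by move=> s; apply: summZ; apply: summ_st1.
apply: eq_bigr => s _; rewrite infsumZ; [by rewrite mulrC | exact: summ_st1].
Qed.

Lemma dvis_rec pi s' : (forall s, is_dist (pi s)) ->
  dvis P gamma d0 pi s' = d0 s' + gamma * \sum_s dvis P gamma d0 pi s * Mk pi s s'.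
Proof.
move=> pd.
rewrite {1}/dvis (infsum_shift (summ_st1 s' pd hd0)) expr0 mul1r.
congr (_ + _); rewrite dW // -infsumZ; last exact: summ_st.
by apply: infsum_ext => t; rewrite exprS -mulrA.
Qed.

Lemma dvis_ge0 pi s : (forall s, is_dist (pi s)) -> 0 <= dvis P gamma d0 pi s.
Proof.
move=> pd; apply: infsum_ge0; first exact: summ_st1.
move=> t; apply: mulr_ge0; first by rewrite exprn_ge0 //; case/andP: hg.
by case: (st_dist t pd hd0) => h _; apply: h.
Qed.

Lemma dvis_sum pi : (forall s, is_dist (pi s)) ->
  (1 - gamma) * \sum_s dvis P gamma d0 pi s = 1.
Proof.
move=> pd.
have e : \sum_s dvis P gamma d0 pi s = 1 + gamma * \sum_s dvis P gamma d0 pi s.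
  rewrite {1}(eq_bigr _ (fun s' _ => dvis_rec pi s' pd)).
  rewrite big_split /= hd0.2 -mulr_sumr exchange_big /=.
  congr (1 + gamma * _); apply: eq_bigr => s _.
  by rewrite -mulr_sumr (Mk_dist pd s).2 mulr1.
by rewrite mulrBl mul1r {1}e addrK.
Qed.

Lemma PD pio pn i : (forall s, is_dist (pio s)) -> (forall s, is_dist (pn s)) ->
  infsum (fun t => gamma ^+ t * exp_rew Rw pn i (stdist P pn d0 t))
    - \sum_s d0 s * Vfun P Rw gamma pio i s
  = \sum_s dvis P gamma d0 pn s * \sum_a pn s a * Afun P Rw gamma pio i s a.
Proof.
move=> pdo pdn.
set V := Vfun P Rw gamma pio i.
rewrite dW //.
pose W t := \sum_s stdist P pn d0 t s * V s.
have e1 : forall s, \sum_a pn s a * Afun P Rw gamma pio i s a =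
    \sum_a pn s a * Rw i s a + gamma * (\sum_a pn s a * \sum_s' P s a s' * V s') - V s.
  move=> s; rewrite /Afun.
  rewrite (eq_bigr (fun a => pn s a * Rw i s a + gamma * (pn s a * \sum_s' P s a s' * V s')
       - pn s a * V s)); last by move=> a _; rewrite Q_bell // mulrBr mulrDr mulrCA.
  by rewrite sumrB big_split /= -mulr_sumr -mulr_suml (pdn s).2 mul1r.
have e2 : forall t, W t.+1 = \sum_s stdist P pn d0 t s * \sum_a pn s a * \sum_s' P s a s' * V s'.
  move=> t; rewrite /W.
  transitivity (\sum_s' \sum_s stdist P pn d0 t s * \sum_a pn s a * (P s a s' * V s')).
    apply: eq_bigr => s' _; rewrite stS_def mulr_suml; apply: eq_bigr => s _.
    by rewrite /Mk -mulrA mulr_suml; congr (_ * _); apply: eq_bigr => a _; rewrite mulrA.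
  rewrite exchange_big; apply: eq_bigr => s _.
  rewrite -mulr_sumr; congr (_ * _).
  rewrite exchange_big; apply: eq_bigr => a _.
  by rewrite mulr_sumr.
have key : forall t,
   gamma ^+ t * \sum_s stdist P pn d0 t s * (\sum_a pn s a * Afun P Rw gamma pio i s a)
   = gamma ^+ t * exp_rew Rw pn i (stdist P pn d0 t)
     + (gamma ^+ t.+1 * W t.+1 - gamma ^+ t * W t).
  move=> t; under eq_bigr do rewrite e1.
  rewrite (eq_bigr (fun s => stdist P pn d0 t s * (\sum_a pn s a * Rw i s a)
     + gamma * (stdist P pn d0 t s * (\sum_a pn s a * \sum_s' P s a s' * V s'))
     - stdist P pn d0 t s * V s)); last by move=> s _; ring.
  rewrite sumrB big_split /= -mulr_sumr -e2.
  rewrite /exp_rew -/(W t) exprS; ring.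
have sE := summ_er i pdn hd0.
have sW : summ (fun t => gamma ^+ t * W t) by apply: summ_st.
have sWS := summ_shift sW.
rewrite (infsum_ext key) infsumD //; last exact: summB.
rewrite infsumB // (infsum_shift sW) expr0 mul1r /W /=.
set X := infsum _; set Y := infsum _.
lra.
Qed.

Lemma maxSA_ge (F : S -> jA -> R) s a : `|F s a| <= maxSA (fun s a => `|F s a|).
Proof. exact: (@le_bigmax0 R (prod S jA) (fun p => `|F p.1 p.2|) (s, a)). Qed.

Lemma maxSA_ge0 (F : S -> jA -> R) : 0 <= maxSA F.
Proof. exact: bigmax0_ge0. Qed.

Lemma Dsum (pio pn : S -> jA -> R) (B : R) : (forall s, is_dist (pio s)) -> (forall s, is_dist (pn s)) ->
  (forall s, \sum_a `|pn s a - pio s a| <= B) ->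
  (1 - gamma) ^+ 2 * \sum_s `|dvis P gamma d0 pn s - dvis P gamma d0 pio s| <= gamma * B.
Proof.
move=> pdo pdn hB.
case/andP: hg => g0 g1.
set dn := dvis P gamma d0 pn; set do := dvis P gamma d0 pio.
have eD : forall s', dn s' - do s' = gamma * (\sum_s (dn s - do s) * Mk pn s s'
     + \sum_s do s * (Mk pn s s' - Mk pio s s')).
  move=> s'; rewrite /dn /do (dvis_rec pn s' pdn) (dvis_rec pio s' pdo) -/dn -/do.
  have t : forall x y z : R, x + y - (x + z) = y - z by move=> x y z; ring.
  rewrite t -mulrBr; congr (_ * _).
  by rewrite -sumrB -big_split; apply: eq_bigr => s _ /=; ring.
have hMn := Mk_dist pdn.
have hMd : forall s, \sum_s' `|Mk pn s s' - Mk pio s s'| <= \sum_a `|pn s a - pio s a|.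
  move=> s; rewrite /Mk.
  apply: le_trans (_ : \sum_s' \sum_a `|pn s a - pio s a| * P s a s' <= _).
    apply: ler_sum => s' _; rewrite -sumrB.
    apply: le_trans (ler_norm_sum _ _ _) _; apply: ler_sum => a _.
    by rewrite -mulrBl normrM (ger0_norm ((hP s a).1 s')).
  rewrite exchange_big /=; apply: ler_sum => a _.
  by rewrite -mulr_sumr (hP s a).2 mulr1.
have h1 : \sum_s' `|dn s' - do s'| <=
    gamma * (\sum_s `|dn s - do s| + B * \sum_s do s).
  apply: le_trans (_ : \sum_s' gamma * (\sum_s `|dn s - do s| * Mk pn s s'
       + \sum_s do s * `|Mk pn s s' - Mk pio s s'|) <= _).
    apply: ler_sum => s' _; rewrite eD normrM ger0_norm //.
    apply: ler_wpM2l => //; apply: le_trans (ler_normD _ _) _.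
    apply: lerD.
      apply: le_trans (ler_norm_sum _ _ _) _; apply: ler_sum => s _.
      by rewrite normrM (ger0_norm ((hMn s).1 s')).
    apply: le_trans (ler_norm_sum _ _ _) _; apply: ler_sum => s _.
    by rewrite normrM (ger0_norm (dvis_ge0 pio s pdo)).
  rewrite -mulr_sumr; apply: ler_wpM2l => //.
  rewrite big_split /=; apply: lerD.
    rewrite exchange_big /=; apply: ler_sum => s _.
    by rewrite -mulr_sumr (hMn s).2 mulr1.
  rewrite exchange_big /= mulr_sumr; apply: ler_sum => s _.
  rewrite -mulr_sumr mulrC; apply: ler_wpM2r; first exact: dvis_ge0.
  exact: le_trans (hMd s) (hB s).
have h2 := dvis_sum pio pdo; rewrite -/do in h2.
set X := \sum_s `|dn s - do s|; set Y := \sum_s do s.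
rewrite -/X -/Y in h1.
have X0 : 0 <= X by apply: sumr_ge0.
have h3 : (1 - gamma) * X <= gamma * B * Y.
  have -> : (1 - gamma) * X = X - gamma * X by ring.
  by rewrite lerBlDl -mulrA -mulrDr.
have g1' : 0 <= 1 - gamma by rewrite subr_ge0 ltW.
have := ler_wpM2l g1' h3.
have -> : (1 - gamma) * (gamma * B * Y) = gamma * B * ((1 - gamma) * Y) by ring.
by rewrite h2 mulr1 expr2 mulrA.
Qed.

Arguments Dsum [pio pn B].

Lemma TRPO_part pio pn B : (forall s, is_dist (pio s)) -> (forall s, is_dist (pn s)) ->
  0 <= B -> (forall s, \sum_a `|pn s a - pio s a| <= B) ->
  - (maxSA (fun s a => `|\sum_i Afun P Rw gamma pio i s a|) * gamma * B ^+ 2 / (1 - gamma) ^+ 2)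
   <= \sum_s (dvis P gamma d0 pn s - dvis P gamma d0 pio s) *
        \sum_i \sum_a pn s a * Afun P Rw gamma pio i s a.
Proof.
move=> pdo pdn B0 hB.
case/andP: hg => g0 g1.
set A := Afun P Rw gamma pio.
set eps := maxSA (fun s a => `|\sum_i A i s a|).
have e0 : 0 <= eps by apply: maxSA_ge0.
have hAb : forall s, `|\sum_i \sum_a pn s a * A i s a| <= eps * B.
  move=> s.
  have -> : \sum_i \sum_a pn s a * A i s a = \sum_a (pn s a - pio s a) * \sum_i A i s a.
    transitivity (\sum_i \sum_a (pn s a - pio s a) * A i s a).
      apply: eq_bigr => i _; under [RHS]eq_bigr do rewrite mulrBl.
      by rewrite sumrB A_sum0 // subr0.
    by rewrite exchange_big; apply: eq_bigr => a _; rewrite mulr_sumr.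
  apply: le_trans (ler_norm_sum _ _ _) _.
  apply: le_trans (_ : \sum_a `|pn s a - pio s a| * eps <= _).
    apply: ler_sum => a _; rewrite normrM; apply: ler_wpM2l => //.
    exact: (maxSA_ge (fun s a => \sum_i A i s a)).
  by rewrite -mulr_suml mulrC; apply: ler_wpM2l => //; exact: hB.
set D := fun s => dvis P gamma d0 pn s - dvis P gamma d0 pio s.
have h1 : - (\sum_s `|D s| * (eps * B)) <=
    \sum_s D s * \sum_i \sum_a pn s a * A i s a.
  rewrite -sumrN; apply: ler_sum => s _.
  have : `|D s * \sum_i \sum_a pn s a * A i s a| <= `|D s| * (eps * B).
    by rewrite normrM; apply: ler_wpM2l.
  by rewrite ler_norml => /andP[].
apply: le_trans h1; rewrite lerN2 -mulr_suml.
have hD := Dsum pdo pdn hB; rewrite -/D in hD.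
have gp : 0 < (1 - gamma) ^+ 2 by rewrite exprn_gt0 // subr_gt0.
have hD' : \sum_s `|D s| <= gamma * B / (1 - gamma) ^+ 2.
  by rewrite ler_pdivlMr // mulrC.
apply: le_trans (_ : gamma * B / (1 - gamma) ^+ 2 * (eps * B) <= _).
  by apply: ler_wpM2r => //; apply: mulr_ge0.
have -> : eps * gamma * B ^+ 2 / (1 - gamma) ^+ 2 = gamma * B / (1 - gamma) ^+ 2 * (eps * B).
  by rewrite expr2; ring.
by [].
Qed.

Lemma zeta_part pio pn (Pit : 'I_N -> S -> jA -> R) :
  - (\sum_(i < N) (2^-1 * maxSA (fun s a => `|Afun P Rw gamma pio i s a|) * #|{: jA}|%:R
                    * \sum_s (dvis P gamma d0 pio s) ^+ 2)
     + \sum_(i < N) (2^-1 * maxSA (fun s a => `|Afun P Rw gamma pio i s a|)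
                    * \sum_s \sum_a (Pit i s a - pn s a) ^+ 2))
  <= \sum_i \sum_s dvis P gamma d0 pio s * \sum_a pn s a * Afun P Rw gamma pio i s a
     - zeta_tot P Rw gamma d0 pio Pit.
Proof.
rewrite /zeta_tot -sumrB -big_split -sumrN; apply: ler_sum => i _ /=.
set A := Afun P Rw gamma pio i.
set m := maxSA (fun s a => `|A s a|).
set dd := dvis P gamma d0 pio.
have m0 : 0 <= m by apply: maxSA_ge0.
have pt : forall s a, - (2^-1 * m * (dd s ^+ 2 + (Pit i s a - pn s a) ^+ 2))
     <= dd s * ((pn s a - Pit i s a) * A s a).
  move=> s a.
  have hA : `|A s a| <= m by exact: (maxSA_ge A).
  set x := dd s; set y := pn s a - Pit i s a; set z := A s a.
  have -> : (Pit i s a - pn s a) ^+ 2 = y ^+ 2 by rewrite /y -sqrrN opprB.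
  have h2 : `|x * y| * 2 <= x ^+ 2 + y ^+ 2.
    rewrite normrM -(real_normK (num_real x)) -(real_normK (num_real y)).
    have := sqr_ge0 (`|x| - `|y|); rewrite sqrrB; lra.
  have h3 : `|x * (y * z)| <= `|x * y| * m.
    by rewrite mulrA normrM; apply: ler_wpM2l.
  have h4 : `|x * y| * m <= 2^-1 * m * (x ^+ 2 + y ^+ 2).
    have := ler_wpM2l m0 h2; rewrite mulrCA => h; lra.
  have := le_trans h3 h4; rewrite ler_norml => /andP[] //.
apply: le_trans (_ : \sum_s \sum_a - (2^-1 * m * (dd s ^+ 2 + (Pit i s a - pn s a) ^+ 2)) <= _).
  rewrite le_eqVlt; apply/orP; left; apply/eqP.
  under [RHS]eq_bigr do rewrite sumrN.
  rewrite sumrN; congr (- _).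
  transitivity (\sum_s \sum_a (2^-1 * m * dd s ^+ 2 + 2^-1 * m * (Pit i s a - pn s a) ^+ 2)); last first.
    by apply: eq_bigr => s _; apply: eq_bigr => a _; rewrite mulrDr.
  under [RHS]eq_bigr do rewrite big_split /= sumr_const.
  rewrite big_split /=; congr (_ + _).
    rewrite mulr_sumr; apply: eq_bigr => s _.
    have -> : #|(xpredT : pred jA)| = #|{: jA}| by apply: eq_card.
    ring.
  rewrite mulr_sumr; apply: eq_bigr => s _; by rewrite mulr_sumr.
rewrite -sumrB; apply: ler_sum => s _.
rewrite -mulrBr -sumrB mulr_sumr; apply: ler_sum => a _.
by rewrite -mulrBl pt.
Qed.

End MDP.

Theorem theorem1 (R : realType) (N : nat) (S : finType) (Act : 'I_N -> finType)
  (P : S -> @jact N Act -> S -> R) (Rw : 'I_N -> S -> @jact N Act -> R)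
  (gamma : R) (d0 : S -> R)
  (piold pinew : forall j : 'I_N, S -> Act j -> R)
  (pisug : 'I_N -> forall j : 'I_N, S -> Act j -> R) :
  0 < gamma < 1 ->
  is_dist d0 ->
  (forall s a, is_dist (P s a)) ->
  (forall j s, is_dist (piold j s)) ->
  (forall j s, is_dist (pinew j s)) ->
  (forall i j s, is_dist (pisug i j s)) ->
  (forall i, pisug i i = pinew i) ->
  (* D_KL^max finite, i.e. pi^ii_old(.|s) << pi^ii_new(.|s); otherwise RHS = -oo *)
  (forall i s a, pinew i s a = 0 -> piold i s a = 0) ->
  let pio := prod_pol piold in
  let pin := prod_pol pinew in
  let Pit := fun i => prod_pol (pisug i) in
  let A := Afun P Rw gamma pio in
  let C := 4 * gamma * maxSA (fun s a => `|\sum_(i < N) A i s a|) / (1 - gamma) ^+ 2 in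
  let f := \sum_(i < N) (2^-1 * maxSA (fun s a => `|A i s a|) * #|{: @jact N Act}|%:R
                         * \sum_s (dvis P gamma d0 pio s) ^+ 2) in
  (eta_tot P Rw gamma d0 pin >=
    eta_tot P Rw gamma d0 pio + zeta_tot P Rw gamma d0 pio Pit
    - C * \sum_(i < N) KLmax (piold i) (pinew i)
    - f
    - \sum_(i < N) (2^-1 * maxSA (fun s a => `|A i s a|)
                     * \sum_s \sum_a (Pit i s a - pin s a) ^+ 2)).
Proof.
move=> /andP[g0 g1] hd0 hP hpo hpn hps hii hac.
cbv zeta beta.
set pio := prod_pol piold.
set pin := prod_pol pinew.
set A := Afun P Rw gamma pio.
have hg : 0 <= gamma < 1 by rewrite (ltW g0) g1.
have pdo : forall s, is_dist (pio s).
  by move=> s; exact: (@prodd_dist R N Act (fun j => piold j s) (fun j => hpo j s)).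
have pdn : forall s, is_dist (pin s).
  by move=> s; exact: (@prodd_dist R N Act (fun j => pinew j s) (fun j => hpn j s)).
set K := \sum_(i < N) KLmax (piold i) (pinew i).
have K0 : 0 <= K by apply: sumr_ge0 => i _; apply: bigmax0_ge0.
set B := Num.sqrt (4 * K).
have B0 : 0 <= B by apply: sqrtr_ge0.
have hB : forall s, \sum_a `|pin s a - pio s a| <= B.
  move=> s.
  have acs : forall a, pin s a = 0 -> pio s a = 0 :=
    @prodd_ac R N Act (fun j => piold j s) (fun j => pinew j s) (fun j x => hac j s x).
  have h := @TV_KL R _ (pio s) (pin s) (pdo s) (pdn s) acs.
  rewrite (@KL_prodd R N Act (fun j => piold j s) (fun j => pinew j s)
     (fun j => hpo j s) (fun j => hpn j s) (fun j x => hac j s x)) in h.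
  have hK : \sum_j KL (piold j s) (pinew j s) <= K.
    apply: ler_sum => j _.
    exact: (@le_bigmax0 R S (fun s => KL (piold j s) (pinew j s)) s).
  have h2 : (\sum_a `|pin s a - pio s a|) ^+ 2 <= 4 * K.
    under eq_bigr do rewrite distrC.
    by apply: le_trans h _; rewrite ler_wpM2l.
  have b0 : 0 <= \sum_a `|pin s a - pio s a| by apply: sumr_ge0.
  by rewrite -(ger0_norm b0) -sqrtr_sqr ler_sqrt // mulr_ge0.
have hT := @TRPO_part R N S Act P Rw gamma d0 hg hP hd0 pio pin B pdo pdn B0 hB.
have hZ := @zeta_part R N S Act P Rw gamma d0 pio pin (fun i => prod_pol (pisug i)).
cbv beta in hZ.
have hPD : eta_tot P Rw gamma d0 pin - eta_tot P Rw gamma d0 pio =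
    \sum_s dvis P gamma d0 pin s * \sum_i \sum_a pin s a * A i s a.
  rewrite /eta_tot.
  under [X in _ - X]eq_bigr do rewrite (@eta_V R N S Act P Rw gamma d0 hg hP pio _ pdo).
  rewrite -sumrB.
  under eq_bigr do rewrite (@PD R N S Act P Rw gamma d0 hg hP hd0 pio pin _ pdo pdn).
  by rewrite exchange_big /=; apply: eq_bigr => s _; rewrite mulr_sumr.
have hL : \sum_s dvis P gamma d0 pio s * \sum_i \sum_a pin s a * A i s a =
    \sum_i \sum_s dvis P gamma d0 pio s * \sum_a pin s a * A i s a.
  by rewrite [RHS]exchange_big /=; apply: eq_bigr => s _; rewrite mulr_sumr.
have hS : \sum_s dvis P gamma d0 pin s * \sum_i \sum_a pin s a * A i s a =
    \sum_s (dvis P gamma d0 pin s - dvis P gamma d0 pio s) * \sum_i \sum_a pin s a * A i s a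
    + \sum_s dvis P gamma d0 pio s * \sum_i \sum_a pin s a * A i s a.
  by rewrite -big_split /=; apply: eq_bigr => s _; ring.
have e4 : maxSA (fun s a => `|\sum_i Afun P Rw gamma pio i s a|) * gamma * B ^+ 2
     / (1 - gamma) ^+ 2 = 4 * gamma * maxSA (fun s a => `|\sum_(i < N) A i s a|) / (1 - gamma) ^+ 2 * K.
  by rewrite /B sqr_sqrtr ?mulr_ge0 //; ring.
rewrite e4 in hT.
rewrite -hL in hZ.
move: hT hZ hPD hS.
set X1 := \sum_s (_ - _) * _.
set X2 := \sum_s dvis P gamma d0 pio s * _.
set X3 := \sum_s dvis P gamma d0 pin s * _.
move=> hT hZ hPD hS.
move: hT hZ hPD hS.
rewrite -/A.
set CK := 4 * gamma * _ / _ * K.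
set F1 := \sum_(i < N) (_ * #|_|%:R * _).
set F2 := \sum_(i < N) (_ * \sum_s \sum_a _).
set Z := zeta_tot _ _ _ _ _ _.
lra.
Qed.
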